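(* For any black/white coloring of $\mathbf N=\{1,\dots,2n\}$ with $n$ nodes of each color, there exists a planar black-white pairing $\rho$ of $\mathbf N$ such that $$\mathrm{sign}_{BW}(\rho)\prod_{\{b,w\}\in\rho}\mathrm{sign}(b,w)=\mathrm{sign}_c(\mathbf N).$$
   Context: Nodes $1,\dots,2n$ arranged counterclockwise, each black or white. Pairing = partition into 2-element blocks; planar = no two pairs $\{a,c\},\{b,d\}$ with $a<b<c<d$. Black-white pairing: each pair has a black and a white node; with black nodes $b_1<\dots<b_n$ and white nodes $w_1<\dots<w_n$, $\mathrm{sign}_{BW}(\rho)$ is the sign of the permutation $\theta$ with $\rho(b_i)=w_{\theta(i)}$. A couple of consecutive nodes of the same color is $(m,m+1)$, $m\in\{1,\dots,2n\}$, indices mod $2n$, with $m,m+1$ same color. For black $b$, white $w$: $a_{b,w}$ = number of $m$ with $\min(b,w)\le m<m+1\le \max(b,w)$, $m,m+1$ same color; $\mathrm{sign}(b,w)=(-1)^{(|b-w|+a_{b,w}-1)/2}$. With all couples $(n_j,n_j+1)$, $n_1<\dots<n_{2k}$, black-couple first elements $s_1<\dots<s_k$ and white-couple first elements $u_1<\dots<u_k$: if node 1 is black let $\varphi(u_i)=2i-1,\varphi(s_i)=2i$, otherwise $\varphi(s_i)=2i-1,\varphi(u_i)=2i$; $\mathrm{sign}_c(\mathbf N)$ is the sign of the permutation $(\varphi(n_1),\dots,\varphi(n_{2k}))$, and $1$ if $k=0$. *)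

(* Defs.v *)
(* Nodes are the naturals 1..2n; colour: true = black, false = white. *)
From mathcomp Require Import all_boot all_order all_algebra.
Set Implicit Arguments. Unset Strict Implicit. Unset Printing Implicit Defensive.
Import GRing.Theory.
Local Open Scope ring_scope.

Definition nodes (n : nat) : seq nat := iota 1 (2 * n)%N.

(* number of inversions of a sequence of naturals; for a sequence listing the
   values of a permutation, its parity is the parity of the permutation *)
Definition inversions (s : seq nat) : nat :=
  (\sum_(i < size s) \sum_(j < size s | (i < j)%N) (nth 0 s j < nth 0 s i))%N.

Definition seq_sign (s : seq nat) : int := (-1) ^+ inversions s.

(* A black-white pairing, given as a fixed-point-free involution rho of {1..2n}
   (the blocks are {i, rho i}) pairing each node with a node of the other colour. *)
Definition is_bw_pairing (n : nat) (col : nat -> bool) (rho : nat -> nat) : Prop :=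
  forall i, i \in nodes n ->
    [/\ rho i \in nodes n, rho (rho i) = i & col (rho i) != col i].

Definition planar (n : nat) (rho : nat -> nat) : Prop :=
  forall a b c d, a \in nodes n -> b \in nodes n -> c \in nodes n -> d \in nodes n ->
    (a < b)%N -> (b < c)%N -> (c < d)%N -> rho a = c -> rho b <> d.

Definition blacks (n : nat) (col : nat -> bool) : seq nat := [seq i <- nodes n | col i].
Definition whites (n : nat) (col : nat -> bool) : seq nat := [seq i <- nodes n | ~~ col i].

(* theta(i) = index of rho(b_i) among the whites (0-based) *)
Definition sign_BW (n : nat) (col : nat -> bool) (rho : nat -> nat) : int :=
  seq_sign [seq index (rho b) (whites n col) | b <- blacks n col].

Definition a_bw (col : nat -> bool) (b w : nat) : nat :=
  count (fun m => col m == col m.+1) (iota (minn b w) (maxn b w - minn b w)).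

Definition absdiff (b w : nat) : nat := (maxn b w - minn b w)%N.

Definition sign_bw (col : nat -> bool) (b w : nat) : int :=
  (-1) ^+ ((absdiff b w + a_bw col b w - 1) %/ 2)%N.

Definition next_node (n m : nat) : nat := if m == (2 * n)%N then 1%N else m.+1.

(* first elements n_1 < ... < n_2k of the couples of consecutive same-colour nodes *)
Definition couples (n : nat) (col : nat -> bool) : seq nat :=
  [seq m <- nodes n | col m == col (next_node n m)].

Definition black_couples n col := [seq m <- couples n col | col m].
Definition white_couples n col := [seq m <- couples n col | ~~ col m].

Definition phi (n : nat) (col : nat -> bool) (m : nat) : nat :=
  if col m then
    (if col 1%N then 2 * index m (black_couples n col) + 2
     else 2 * index m (black_couples n col) + 1)%N
  else
    (if col 1%N then 2 * index m (white_couples n col) + 1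
     else 2 * index m (white_couples n col) + 2)%N.

Definition sign_c (n : nat) (col : nat -> bool) : int :=
  seq_sign [seq phi n col m | m <- couples n col].

(* Main.v *)
Require Import Defs.
From mathcomp Require Import all_boot all_order all_algebra.
From mathcomp Require Import zify.
Import GRing.Theory.

Module Aux.
Set Implicit Arguments. Unset Strict Implicit. Unset Printing Implicit Defensive.

Lemma nth_ltn_iff (s : seq nat) i j : sorted ltn s -> i < size s -> j < size s ->
  (nth 0 s i < nth 0 s j) = (i < j).
Proof.
move=> ss hi hj.
have H := sorted_ltn_nth ltn_trans 0 ss.
case: (ltngtP i j) => [lij|lji|->]; last by rewrite ltnn.
- by apply: H.
- apply/negbTE; rewrite -leqNgt; apply: ltnW; exact: H.
Qed.

Lemma inv_map (s : seq nat) (f : nat -> nat) : sorted ltn s ->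
  inversions (map f s) = \sum_(x <- s) \sum_(y <- s) ((x < y) && (f y < f x)).
Proof.
move=> ss; rewrite /inversions size_map (big_nth 0) big_mkord.
apply: eq_bigr => i _.
rewrite (big_nth 0) big_mkord big_mkcond /=.
apply: eq_bigr => j _.
rewrite !(nth_map 0) // nth_ltn_iff //.
by case: (i < j).
Qed.

Lemma index_ltn_iff (s : seq nat) x y : sorted ltn s -> x \in s -> y \in s ->
  (index x s < index y s) = (x < y).
Proof.
move=> ss xs ys.
by rewrite -[in RHS](nth_index 0 xs) -[in RHS](nth_index 0 ys) nth_ltn_iff // index_mem.
Qed.

Lemma count_sum (T : Type) (a : pred T) (r : seq T) : count a r = \sum_(x <- r) (a x : nat).
Proof. by elim: r => [|x r IH]; rewrite ?big_nil ?big_cons //= IH. Qed.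

Lemma sum_index (s : seq nat) (F : nat -> nat) : uniq s ->
  \sum_(x <- s) F (index x s) = \sum_(a < size s) F a.
Proof.
move=> us; rewrite (big_nth 0) big_mkord; apply: eq_bigr => i _.
by rewrite index_uniq.
Qed.

Lemma sum_const_nat (T : Type) (r : seq T) (P : pred T) (c : nat) :
  \sum_(x <- r | P x) c = count P r * c.
Proof. by rewrite -sum1_count big_distrl /=; apply: eq_bigr => *; rewrite mul1n. Qed.

Lemma sgn_mod2 (a b : nat) : a %% 2 = b %% 2 -> ((-1 : int) ^+ a = (-1) ^+ b)%R.
Proof.
rewrite !modn2 => H; have Ho : odd a = odd b by move: H; case: (odd a); case: (odd b).
by rewrite -(signr_odd _ a) -(signr_odd _ b) Ho.
Qed.

Fixpoint bwc (k : seq bool) : nat :=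
  match k with [::] => 0 | b :: l => (if b then count negb l else 0) + bwc l end.

Lemma X_bwc (C : seq nat) (col : nat -> bool) : sorted ltn C ->
  \sum_(s <- C | col s) \sum_(u <- C | ~~ col u) (s < u) = bwc (map col C).
Proof.
elim: C => [|c C IH] /=; first by rewrite big_nil.
move=> sC; have sC' := path_sorted sC.
have allc : all (fun y => c < y) C.
  by apply: (order_path_min ltn_trans); exact: sC.
have E : \sum_(s <- C | col s) \sum_(u <- c :: C | ~~ col u) (s < u)
       = \sum_(s <- C | col s) \sum_(u <- C | ~~ col u) (s < u).
  rewrite big_seq_cond [RHS]big_seq_cond; apply: eq_bigr => s /andP[sC0 _].
  rewrite big_cons; case: ifP => // _.
  by rewrite ltnNge ltnW ?(allP allc).
rewrite big_cons E IH //; case: ifP => hc; last by rewrite add0n.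
rewrite big_cons hc /=; congr (_ + _).
rewrite count_map -sum1_count big_seq_cond [RHS]big_seq_cond.
by apply: eq_bigr => u /andP[uC _]; rewrite (allP allc).
Qed.

Definition cnd (c1 : bool) (b a : nat) : bool := if c1 then b <= a else b < a.
Definition Fk (c1 : bool) (k : nat) : nat := \sum_(a < k) \sum_(b < k) cnd c1 b a.
Definition Tex (kap : seq bool) (c1 : bool) : nat :=
  count id kap * count id kap + Fk c1 (count id kap) + bwc kap.

Lemma couples_sorted n col : sorted ltn (couples n col).
Proof. apply: sorted_filter; [exact: ltn_trans | exact: iota_ltn_sorted]. Qed.

Lemma couples_uniq n col : uniq (couples n col).
Proof. exact: filter_uniq (iota_uniq _ _). Qed.

Lemma T1 n col :
  count id (map col (couples n col)) = count negb (map col (couples n col)) ->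
  sign_c n col = ((-1) ^+ Tex (map col (couples n col)) (col 1%N))%R.
Proof.
move=> hk.
set C := couples n col.
have sC : sorted ltn C := couples_sorted n col.
have uC : uniq C := couples_uniq n col.
set BC := [seq m <- C | col m].
set WC := [seq m <- C | ~~ col m].
have sBC : sorted ltn BC by apply: sorted_filter => //; exact: ltn_trans.
have sWC : sorted ltn WC by apply: sorted_filter => //; exact: ltn_trans.
have phiB m : col m -> phi n col m = (2 * index m BC + (if col 1%N then 2 else 1))%N.
  by move=> hm; rewrite /phi hm; case: (col 1%N).
have phiW m : ~~ col m -> phi n col m = (2 * index m WC + (if col 1%N then 1 else 2))%N.
  by move=> hm; rewrite /phi (negbTE hm); case: (col 1%N).
rewrite /sign_c /seq_sign inv_map //.
set T := fun x y => ((x < y) && (phi n col y < phi n col x)).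
have BB : \sum_(x <- C | col x) \sum_(y <- C | col y) T x y = 0.
  rewrite big_seq_cond; apply: big1 => x /andP[xC hx].
  rewrite big_seq_cond; apply: big1 => y /andP[yC hy].
  rewrite /T phiB // phiB //.
  have xB : x \in BC by rewrite mem_filter hx.
  have yB : y \in BC by rewrite mem_filter hy.
  case: (ltnP x y) => //= lxy.
  rewrite -(index_ltn_iff sBC xB yB) in lxy.
  apply/eqP; rewrite eqb0 -leqNgt; case: (col 1%N); lia.
have WW : \sum_(x <- C | ~~ col x) \sum_(y <- C | ~~ col y) T x y = 0.
  rewrite big_seq_cond; apply: big1 => x /andP[xC hx].
  rewrite big_seq_cond; apply: big1 => y /andP[yC hy].
  rewrite /T phiW // phiW //.
  have xB : x \in WC by rewrite mem_filter hx.
  have yB : y \in WC by rewrite mem_filter hy.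
  case: (ltnP x y) => //= lxy.
  rewrite -(index_ltn_iff sWC xB yB) in lxy.
  apply/eqP; rewrite eqb0 -leqNgt; case: (col 1%N); lia.
have Hpair : forall s u, s \in C -> col s -> u \in C -> ~~ col u ->
   (T s u + T u s + (s < u) + cnd (col 1%N) (index u WC) (index s BC)
    = 1 + 2 * ((s < u) && cnd (col 1%N) (index u WC) (index s BC)))%N.
  move=> s u sC0 hs uC0 hu.
  have nsu : s != u by apply/eqP => E; move: hu; rewrite -E hs.
  rewrite /T /cnd (phiB s hs) (phiW u hu).
  set a := index u WC; set b := index s BC.
  have q1 : (2 * a + 1 < 2 * b + 2) = (a <= b) by apply/idP/idP => ?; lia.
  have q2 : (2 * b + 2 < 2 * a + 1) = ~~ (a <= b) by rewrite -ltnNge; apply/idP/idP => ?; lia.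
  have q3 : (2 * a + 2 < 2 * b + 1) = (a < b) by apply/idP/idP => ?; lia.
  have q4 : (2 * b + 1 < 2 * a + 2) = ~~ (a < b) by rewrite -leqNgt; apply/idP/idP => ?; lia.
  move: nsu; case: (col 1%N); rewrite ?q1 ?q2 ?q3 ?q4;
  case: (ltngtP s u) => //= _ _; [case: (a <= b) | case: (a <= b) | case: (a < b) | case: (a < b)] => //.
set I := \sum_(x <- C) _.
set X := \sum_(s <- C | col s) \sum_(u <- C | ~~ col u) (s < u).
set Cs := \sum_(s <- C | col s) \sum_(u <- C | ~~ col u) cnd (col 1%N) (index u WC) (index s BC).
set Y := \sum_(s <- C | col s) \sum_(u <- C | ~~ col u) ((s < u) && cnd (col 1%N) (index u WC) (index s BC)).
have HI : I = \sum_(s <- C | col s) \sum_(u <- C | ~~ col u) (T s u + T u s).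
  rewrite /I (bigID col) /=.
  rewrite (eq_bigr (fun x => \sum_(y <- C | col y) T x y + \sum_(y <- C | ~~ col y) T x y));
    last by move=> x _; rewrite (bigID col).
  rewrite [X in _ + X](eq_bigr (fun x => \sum_(y <- C | col y) T x y + \sum_(y <- C | ~~ col y) T x y));
    last by move=> x _; rewrite (bigID col).
  rewrite !big_split /= BB WW add0n addn0.
  rewrite [X in _ + X](exchange_big) /= -big_split /=.
  by apply: eq_bigr => s _; rewrite big_split.
have Hsum : (I + X + Cs = count col C * count (fun u => ~~ col u) C + 2 * Y)%N.
  rewrite HI /X /Cs /Y -!big_split /= big_distrr /=.
  rewrite -[X in (_ = X * _ + _)%N]sum1_count big_distrl -big_split /=.
  rewrite big_seq_cond [RHS]big_seq_cond; apply: eq_bigr => s /andP[sC0 hs].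
  rewrite mul1n -sum1_count big_distrr -!big_split /= big_seq_cond [RHS]big_seq_cond.
  apply: eq_bigr => u /andP[uC0 hu].
  by rewrite Hpair // muln1.
have HCs : Cs = Fk (col 1%N) (count id (map col C)).
  rewrite /Cs /Fk -big_filter.
  rewrite (eq_bigr (fun s => \sum_(b < size WC) cnd (col 1%N) b (index s BC))); last first.
    by move=> s _; rewrite -big_filter -/WC (sum_index (fun u => cnd (col 1%N) u (index s BC)))
       // /WC filter_uniq.
  rewrite -/BC (sum_index (fun a => \sum_(b < size WC) cnd (col 1%N) b a)); last by rewrite /BC filter_uniq.
  have e1 : size BC = count id (map col C) by rewrite size_filter count_map.
  have e2 : size WC = count id (map col C) by rewrite size_filter hk count_map.
  by rewrite /BC /WC e1 e2.
have HX : X = bwc (map col C) by rewrite /X X_bwc.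
apply: sgn_mod2.
rewrite /Tex -HCs -HX.
have e1 : count col C = count id (map col C) by rewrite count_map.
have e2 : count (fun u => ~~ col u) C = count id (map col C) by rewrite hk count_map.
rewrite e1 e2 in Hsum.
move: Hsum; set k := count id _ ; move=> Hsum.
lia.
Qed.

Lemma sum_next n (F : nat -> nat) :
  \sum_(m <- nodes n) F (next_node n m) = \sum_(m <- nodes n) F m.
Proof.
case: n => [|n]; first by rewrite /nodes !big_nil.
rewrite /nodes.
have [k ek] : exists k, k = (2 * n).+1 by eexists.
have -> : (2 * n.+1 = k.+1)%N by lia.
rewrite -[in LHS](addn1 k) iotaD big_cat big_seq1.
have -> : next_node n.+1 (1 + k) = 1%N.
  by rewrite /next_node; case: eqP => //; lia.
have -> : \sum_(m <- iota 1 k) F (next_node n.+1 m) = \sum_(m <- iota 1 k) F m.+1.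
  rewrite big_seq [RHS]big_seq; apply: eq_bigr => m; rewrite mem_iota => hm.
  by rewrite /next_node; case: eqP => // ?; lia.
rewrite [in RHS]/iota -/(iota 2 k) big_cons addnC.
by rewrite (iotaDl 1 1) big_map.
Qed.

Lemma count_sumb (s : seq nat) (P : pred nat) : count P s = \sum_(m <- s) (P m : nat).
Proof. exact: count_sum. Qed.

Lemma kbkw n col : count col (nodes n) = n ->
  count id (map col (couples n col)) = count negb (map col (couples n col)).
Proof.
move=> hc.
rewrite !count_map /couples !count_filter !count_sumb.
set nx := next_node n.
have h1 : \sum_(m <- nodes n) (col m : nat)
   = \sum_(m <- nodes n) ((col m && col (nx m)) : nat) + \sum_(m <- nodes n) ((col m && ~~ col (nx m)) : nat).
  by rewrite -big_split; apply: eq_bigr => m _; case: (col m); case: (col (nx m)).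
have h2 : \sum_(m <- nodes n) (col (nx m) : nat)
   = \sum_(m <- nodes n) ((col m && col (nx m)) : nat) + \sum_(m <- nodes n) ((~~ col m && col (nx m)) : nat).
  by rewrite -big_split; apply: eq_bigr => m _; case: (col m); case: (col (nx m)).
have h3 : \sum_(m <- nodes n) 1 = \sum_(m <- nodes n) ((col m && col (nx m)) : nat) + \sum_(m <- nodes n) ((col m && ~~ col (nx m)) : nat)
   + \sum_(m <- nodes n) ((~~ col m && col (nx m)) : nat) + \sum_(m <- nodes n) ((~~ col m && ~~ col (nx m)) : nat).
  by rewrite -!big_split; apply: eq_bigr => m _; case: (col m); case: (col (nx m)).
have h4 : \sum_(m <- nodes n) (col (nx m) : nat) = \sum_(m <- nodes n) (col m : nat).
  exact: (sum_next n (fun m => (col m : nat))).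
rewrite sum1_count count_predT size_iota in h3.
rewrite -count_sumb hc in h1.
rewrite (eq_bigr (fun m => ((col m && col (nx m)) : nat))); last first.
  by move=> m _ /=; case: (col m); case: (col (nx m)).
rewrite [RHS](eq_bigr (fun m => ((~~ col m && ~~ col (nx m)) : nat))); last first.
  by move=> m _ /=; case: (col m); case: (col (nx m)).
rewrite h4 -count_sumb hc in h2; lia.
Qed.

Lemma Fk_S c k : Fk c k.+1 = (Fk c k + k + c)%N.
Proof.
rewrite /Fk big_ord_recr /=.
rewrite (eq_bigr (fun a : 'I_k => \sum_(b < k) cnd c b a)); last first.
  move=> a _; rewrite big_ord_recr /= /cnd.
  have ha := ltn_ord a.
  have -> : (if c then k <= a else k < a) = false by case: c; lia.
  by rewrite addn0.
rewrite -addnA; congr (_ + _).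
rewrite big_ord_recr /= /cnd.
rewrite (eq_bigr (fun _ => 1%N)); last first.
  by move=> b _; have hb := ltn_ord b; case: c; rewrite /= ?hb ?(ltnW hb).
rewrite sum1_card card_ord.
by case: c; rewrite ?leqnn ?ltnn.
Qed.

Lemma bwc_cat (l1 l2 : seq bool) :
  bwc (l1 ++ l2) = (bwc l1 + count id l1 * count negb l2 + bwc l2)%N.
Proof.
elim: l1 => [|b l1 IH] //=.
rewrite IH count_cat; case: b => /=; lia.
Qed.

Lemma Tex_del (c1 x : bool) (k1 k2 : seq bool) :
  count id (k1 ++ x :: ~~ x :: k2) = count negb (k1 ++ x :: ~~ x :: k2) ->
  (Tex (k1 ++ x :: ~~ x :: k2) c1) %% 2 = (Tex (k1 ++ k2) c1 + size k1 + 1 + (c1 (+) x)) %% 2.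
Proof.
move=> hb.
rewrite /Tex !bwc_cat.
have e1 : count id (k1 ++ x :: ~~ x :: k2) = (count id (k1 ++ k2)).+1.
  by rewrite !count_cat /=; case: (x) => /=; lia.
rewrite e1 Fk_S.
set k := count id (k1 ++ k2).
have hs : size k1 = (count id k1 + count negb k1)%N.
  by rewrite -(count_predC id) .
move: hb; rewrite !count_cat /= => hb.
have ek : k = (count id k1 + count id k2)%N by rewrite /k count_cat.
have bw2 : bwc (x :: ~~ x :: k2) = ((x : nat) + count negb k2 + bwc k2)%N.
  by case: (x) => /=; lia.
clear e1 bw2.
move: hb; case: x; case: c1 => /= hb; rewrite ?addn0 ?add0n; nia.
Qed.

Definition gi (i m : nat) : nat := if m < i then m else m.+2.
Definition delc (i : nat) (col : nat -> bool) : nat -> bool := fun m => col (gi i m).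

Lemma prefix_par (col : nat -> bool) j :
  (count (fun m => col m == col m.+1) (iota 1 j) + (col 1%N != col j.+1)) %% 2 = j %% 2.
Proof.
elim: j => [|j IH]; first by rewrite /= eqxx.
have -> : iota 1 j.+1 = iota 1 j ++ [:: j.+1] by rewrite -[j.+1]addn1 iotaD add1n addn1.
rewrite count_cat /= addn0.
move: IH; case: (col 1%N); case: (col j.+1); case: (col j.+2) => /=; lia.
Qed.

Section Kap.
Variables (n' j r : nat) (col : nat -> bool).
Hypothesis hjr : (2 * n'.+1 = j + 3 + r)%N.
Hypothesis hr : (0 < r)%N.

Let n := n'.+1.
Let col' := delc j.+2 col.

Lemma nodes_old : nodes n = iota 1 j ++ [:: j.+1; j.+2; j.+3] ++ iota (j + 4) r.
Proof.
rewrite /nodes /n hjr -!addnA iotaD; congr (_ ++ _).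
rewrite iotaD; congr (_ ++ _); f_equal; lia.
Qed.

Lemma nodes_new : nodes n' = iota 1 j ++ [:: j.+1] ++ iota (j + 2) r.
Proof.
rewrite /nodes; have -> : (2 * n' = j + (1 + r))%N by lia.
rewrite iotaD; congr (_ ++ _).
rewrite iotaD; congr (_ ++ _); f_equal; lia.
Qed.

Definition K1 := map col [seq m <- iota 1 j | col m == col m.+1].
Definition K2 := map col [seq m <- iota (j + 4) r | col m == col (next_node n m)].

Lemma kap_old : map col (couples n col) =
  K1 ++ (if col j.+1 == col j.+2 then [:: col j.+1] else [::]) ++
        (if col j.+2 == col j.+3 then [:: col j.+2] else [::]) ++
        (if col j.+3 == col j.+4 then [:: col j.+3] else [::]) ++ K2.
Proof.
rewrite /couples nodes_old !filter_cat !map_cat /K1 /K2; congr (_ ++ _).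
  congr map; apply: eq_in_filter => m; rewrite mem_iota => hm.
  by rewrite /next_node ifF //; apply/eqP; lia.
rewrite /=.
have e1 : next_node n j.+1 = j.+2 by rewrite /next_node ifF //; apply/eqP; lia.
have e2 : next_node n j.+2 = j.+3 by rewrite /next_node ifF //; apply/eqP; lia.
have e3 : next_node n j.+3 = j.+4 by rewrite /next_node ifF //; apply/eqP; lia.
rewrite e1 e2 e3; by case: (col j.+1 == col j.+2); case: (col j.+2 == col j.+3); case: (col j.+3 == col j.+4).
Qed.

Lemma kap_new : map col' (couples n' col') =
  K1 ++ (if col j.+1 == col j.+4 then [:: col j.+1] else [::]) ++ K2.
Proof.
rewrite /couples nodes_new !filter_cat !map_cat /K1 /K2; congr (_ ++ _).
  have -> : [seq m <- iota 1 j | col' m == col' (next_node n' m)] =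
            [seq m <- iota 1 j | col m == col m.+1].
    apply: eq_in_filter => m; rewrite mem_iota => hm.
    rewrite /next_node ifF; last by apply/eqP; lia.
    by rewrite /col' /delc /gi !ifT //; lia.
  apply/eq_in_map => m; rewrite mem_filter mem_iota => /andP[_ hm].
  by rewrite /col' /delc /gi ifT //; lia.
congr (_ ++ _).
  have e : next_node n' j.+1 = j.+2 by rewrite /next_node ifF //; apply/eqP; lia.
  have c1 : col' j.+1 = col j.+1 by rewrite /col' /delc /gi ifT.
  have c2 : col' j.+2 = col j.+4 by rewrite /col' /delc /gi ltnn.
  by rewrite /= e c1 c2; case: ifP => //= _; rewrite c1.
have -> : iota (j + 4) r = map (addn 2) (iota (j + 2) r).
  by rewrite -iotaDl; f_equal; lia.
rewrite filter_map -map_comp.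
have -> : [seq m <- iota (j + 2) r | col' m == col' (next_node n' m)] =
          [seq m <- iota (j + 2) r | preim (addn 2) (fun m => col m == col (next_node n m)) m].
  apply: eq_in_filter => m; rewrite mem_iota => hm /=.
  rewrite /col' /delc /gi ifF; last by lia.
  congr (_ == _).
  rewrite /next_node /n; case: eqP => hm2.
    rewrite ifT; last by apply/eqP; lia.
    by [].
  rewrite ifF; last by lia.
  rewrite ifF; last by apply/eqP; lia.
  congr col; lia.
apply/eq_in_map => m; rewrite mem_filter mem_iota => /andP[_ hm].
rewrite /col' /delc /gi /= ifF; [congr col; lia | lia].
Qed.

Lemma Tdel : col j.+2 != col j.+3 -> count col (nodes n) = n ->
  (Tex (map col (couples n col)) (col 1%N)) %% 2 =
  (Tex (map col' (couples n' col')) (col' 1%N) +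
     j.+1 * ((col j.+1 == col j.+2) && (col j.+3 == col j.+4))) %% 2.
Proof.
move=> hneq hcol.
have hbal := kbkw hcol.
have c1 : col' 1%N = col 1%N by rewrite /col' /delc /gi.
have hz : col j.+3 = ~~ col j.+2 by move: hneq; case: (col j.+2); case: (col j.+3).
have hpp := prefix_par col j.
have hs : size K1 = count (fun m => col m == col m.+1) (iota 1 j) by rewrite /K1 size_map size_filter.
rewrite kap_old kap_new c1 hz; rewrite kap_old hz in hbal.
move: hbal hpp hs; rewrite /= -/K1.
case: (col j.+1); case: (col j.+2); case: (col j.+4) => /= hbal hpp hs; rewrite ?muln0 ?addn0 //.
- move: (Tex_del (col 1%N) (x := true) hbal) => /= ->.
  move: hpp; rewrite -hs; case: (col 1%N) => /=; lia.
- move: (Tex_del (col 1%N) (x := false) hbal) => /= ->.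
  move: hpp; rewrite -hs; case: (col 1%N) => /=; lia.
Qed.

End Kap.

Definition ebw (col : nat -> bool) (b w : nat) : nat :=
  ((absdiff b w + a_bw col b w - 1) %/ 2)%N.
Definition EB n (col : nat -> bool) (rho : nat -> nat) : nat :=
  \sum_(b <- nodes n | col b) \sum_(b' <- nodes n | col b') ((b < b') && (rho b' < rho b)).
Definition ES n (col : nat -> bool) (rho : nat -> nat) : nat :=
  \sum_(b <- nodes n | col b) ebw col b (rho b).

Lemma En_eq n col rho : is_bw_pairing n col rho ->
  (sign_BW n col rho * \prod_(b <- nodes n | col b) sign_bw col b (rho b)
   = (-1) ^+ (EB n col rho + ES n col rho))%R.
Proof.
move=> hp.
rewrite exprD /sign_bw prodrXr /ES; congr (_ * _)%R.
rewrite /sign_BW /seq_sign inv_map; last first.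
  by rewrite /blacks; apply: sorted_filter; [exact: ltn_trans | exact: iota_ltn_sorted].
rewrite /EB /blacks !big_filter; congr (_ ^+ _)%R.
rewrite big_seq_cond [RHS]big_seq_cond; apply: eq_bigr => x /andP[xN hx].
rewrite big_filter big_seq_cond [RHS]big_seq_cond; apply: eq_bigr => y /andP[yN hy].
have sW : sorted ltn (whites n col).
  by rewrite /whites; apply: sorted_filter; [exact: ltn_trans | exact: iota_ltn_sorted].
have [rxN _ cx] := hp x xN.
have [ryN _ cy] := hp y yN.
have rxW : rho x \in whites n col.
  by rewrite /whites mem_filter rxN andbT; move: cx; rewrite hx; case: (col (rho x)).
have ryW : rho y \in whites n col.
  by rewrite /whites mem_filter ryN andbT; move: cy; rewrite hy; case: (col (rho y)).
by rewrite index_ltn_iff.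
Qed.

Lemma gi_ltn i a b : (gi i a < gi i b) = (a < b).
Proof. rewrite /gi; case: (ltnP a i); case: (ltnP b i) => /= *; apply/idP/idP => *; lia. Qed.

Lemma sum_split n' i (F : nat -> nat) : (0 < i)%N -> (i <= (2 * n').+1)%N ->
  \sum_(m <- nodes n'.+1) F m = (\sum_(m <- nodes n') F (gi i m) + F i + F i.+1)%N.
Proof.
move=> h1 h2.
have [k ek] : exists k, i = k.+1 by exists i.-1; lia.
have [r er] : exists r, (2 * n' = k + r)%N by exists (2 * n' - k)%N; lia.
have eo : nodes n'.+1 = iota 1 k ++ [:: k.+1; k.+2] ++ iota (k + 3) r.
  rewrite /nodes; have -> : (2 * n'.+1 = k + (2 + r))%N by lia.
  rewrite iotaD; congr (_ ++ _); rewrite iotaD; congr (_ ++ _).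
  f_equal; lia.
have en : nodes n' = iota 1 k ++ iota (k + 1) r.
  by rewrite /nodes er iotaD addnC.
rewrite eo en !big_cat /= !big_cons big_nil addn0.
have -> : \sum_(m <- iota 1 k) F (gi i m) = \sum_(m <- iota 1 k) F m.
  rewrite big_seq [RHS]big_seq; apply: eq_bigr => m; rewrite mem_iota => hm.
  by rewrite /gi ifT //; lia.
have -> : \sum_(m <- iota (k + 1) r) F (gi i m) = \sum_(m <- iota (k + 3) r) F m.
  have -> : iota (k + 3) r = map (addn 2) (iota (k + 1) r) by rewrite -iotaDl; f_equal; lia.
  rewrite big_map big_seq [RHS]big_seq; apply: eq_bigr => m; rewrite mem_iota => hm.
  by rewrite /gi ifF; [congr F; lia | lia].
rewrite ek; lia.
Qed.

Lemma sum_inv (N : seq nat) (rho : nat -> nat) (F : nat -> nat) : uniq N ->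
  (forall u, u \in N -> rho u \in N /\ rho (rho u) = u) ->
  \sum_(u <- N) F (rho u) = \sum_(u <- N) F u.
Proof.
move=> uN h.
rewrite -(big_map rho predT F); apply: perm_big.
apply: uniq_perm.
- rewrite map_inj_in_uniq // => a b aN bN e.
  by rewrite -(proj2 (h a aN)) e (proj2 (h b bN)).
- exact: uN.
- move=> x; apply/mapP/idP => [[y yN ->] | xN]; first exact: (proj1 (h y yN)).
  by exists (rho x); [exact: (proj1 (h x xN)) | rewrite (proj2 (h x xN))].
Qed.

Lemma count_lt_iota n i : (0 < i)%N -> (i <= (2 * n).+1)%N ->
  count (fun u => u < i) (nodes n) = i.-1.
Proof.
move=> h1 h2; rewrite /nodes.
have [k ek] : exists k, i = k.+1 by exists i.-1; lia.
have [r er] : exists r, (2 * n = k + r)%N by exists (2 * n - k)%N; lia.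
rewrite er iotaD count_cat.
have -> : count (fun u => u < i) (iota 1 k) = k.
  rewrite (eq_in_count (a2 := predT)) ?count_predT ?size_iota // => m; rewrite mem_iota => hm /=; lia.
have -> : count (fun u => u < i) (iota (1 + k) r) = 0.
  apply/eqP; rewrite -leqn0 leqNgt -has_count; apply/hasPn => m; rewrite mem_iota => hm /=; lia.
by rewrite ek addn0.
Qed.

Definition Sst n (col : nat -> bool) (rho : nat -> nat) (i : nat) : nat :=
  \sum_(u <- nodes n | col u) ((u < i) != (rho u < i)).

Lemma S_par n col rho i : is_bw_pairing n col rho -> (0 < i)%N -> (i <= (2 * n).+1)%N ->
  (Sst n col rho i) %% 2 = i.-1 %% 2.
Proof.
move=> hp h1 h2.
have uN : uniq (nodes n) by exact: iota_uniq.
have hinv : forall u, u \in nodes n -> rho u \in nodes n /\ rho (rho u) = u.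
  by move=> u uN0; have [? ? _] := hp u uN0.
set t := fun u => (u < i) != (rho u < i).
have ht : forall u, u \in nodes n -> t (rho u) = t u.
  by move=> u uN0; rewrite /t (proj2 (hinv u uN0)); case: (u < i); case: (rho u < i).
have hS : (\sum_(u <- nodes n) (t u : nat) = 2 * Sst n col rho i)%N.
  rewrite /Sst (bigID col) /= mul2n -addnn; congr (_ + _).
  rewrite big_mkcond [RHS]big_mkcond /= -(sum_inv (fun u => if ~~ col u then (t u : nat) else 0) uN hinv).
  rewrite big_seq [RHS]big_seq; apply: eq_bigr => u uN0.
  have [_ _ cu] := hp u uN0.
  rewrite ht //; move: cu; case: (col u); case: (col (rho u)) => //.
set A := \sum_(u <- nodes n) ((u < i) && ~~ (rho u < i) : nat).
have hA : (\sum_(u <- nodes n) (t u : nat) = 2 * A)%N.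
  rewrite mul2n -addnn.
  have -> : \sum_(u <- nodes n) (t u : nat) = (A + \sum_(u <- nodes n) (~~ (u < i) && (rho u < i) : nat))%N.
    rewrite /A -big_split; apply: eq_bigr => u _ /=; rewrite /t.
    by case: (u < i); case: (rho u < i).
  congr (_ + _); rewrite /A -(sum_inv (fun u => ((u < i) && ~~ (rho u < i) : nat)) uN hinv).
  rewrite big_seq [RHS]big_seq; apply: eq_bigr => u uN0.
  by rewrite (proj2 (hinv u uN0)); case: (u < i); case: (rho u < i).
set B := \sum_(u <- nodes n) ((u < i) && (rho u < i) : nat).
have hAB : (A + B = i.-1)%N.
  rewrite -(count_lt_iota h1 h2) count_sum /A /B -big_split; apply: eq_bigr => u _ /=.
  by case: (u < i); case: (rho u < i).
set B1 := \sum_(u <- nodes n) ((u < i) && (rho u < i) && (u < rho u) : nat).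
have hB : (B = 2 * B1)%N.
  rewrite mul2n -addnn.
  have -> : B = (B1 + \sum_(u <- nodes n) ((u < i) && (rho u < i) && (rho u < u) : nat))%N.
    rewrite /B /B1 -big_split big_seq [RHS]big_seq; apply: eq_bigr => u uN0 /=.
    have [_ _ cu] := hp u uN0.
    have nu : rho u != u by apply/eqP => e; move: cu; rewrite e eqxx.
    move: nu; case: (ltngtP u (rho u)) => [|| ->]; rewrite ?eqxx //;
    by case: (u < i); case: (rho u < i).
  congr (_ + _); rewrite /B1 -(sum_inv (fun u => ((u < i) && (rho u < i) && (u < rho u) : nat)) uN hinv).
  rewrite big_seq [RHS]big_seq; apply: eq_bigr => u uN0.
  by rewrite (proj2 (hinv u uN0)); case: (u < i); case: (rho u < i).
lia.
Qed.

Definition aw (col : nat -> bool) lo hi : nat :=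
  count (fun m => col m == col m.+1) (iota lo (hi - lo)).

Definition ddf (col : nat -> bool) i : bool :=
  (col i.-1 == col i) && (col i.+1 == col i.+2).

Lemma aw_del i col lo hi : (lo <= hi)%N -> col i != col i.+1 ->
  aw col (gi i lo) (gi i hi) =
  (aw (delc i col) lo hi + 2 * (ddf col i && ((lo < i) && (i <= hi))))%N.
Proof.
move=> hlh hneq; rewrite /aw /delc.
case: (ltnP hi i) => hhi.
- rewrite /gi !ifT; try lia.
  rewrite ?andbF muln0 addn0; apply: eq_in_count => m; rewrite mem_iota => hm /=.
  by rewrite !ifT //; lia.
case: (ltnP lo i) => hlo.
-
  have [k ek] : exists k, i = k.+1 by exists i.-1; lia.
  rewrite /gi ifT // ifF; last by lia.
  rewrite !andbT.
  have -> : (hi.+2 - lo = (k - lo) + (3 + (hi - i)))%N by lia.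
  have -> : (hi - lo = (k - lo) + (1 + (hi - i)))%N by lia.
  rewrite !iotaD !count_cat.
  have -> : count (fun m => col (if m < i then m else m.+2) == col (if m.+1 < i then m.+1 else m.+3))
      (iota lo (k - lo)) = count (fun m => col m == col m.+1) (iota lo (k - lo)).
    apply: eq_in_count => m; rewrite mem_iota => hm /=; rewrite !ifT //; lia.
  have -> : (lo + (k - lo) = k)%N by lia.
  have -> : iota (k + 3) (hi - i) = map (addn 2) (iota (k + 1) (hi - i)).
    by rewrite -iotaDl; f_equal; lia.
  rewrite count_map.
  have -> : count (fun m => col (if m < i then m else m.+2) == col (if m.+1 < i then m.+1 else m.+3))
      (iota (k + 1) (hi - i)) = count (preim (addn 2) (fun m => col m == col m.+1)) (iota (k + 1) (hi - i)).
    apply: eq_in_count => m; rewrite mem_iota => hm /=; rewrite !ifF; try lia.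
    by rewrite !add2n.
  rewrite /= !addn0 ek /ddf /=.
  have -> : (k < k.+1) = true by lia.
  have -> : (k.+1 < k.+1) = false by lia.
  rewrite ek in hneq.
  move: hneq; case: (col k); case: (col k.+1); case: (col k.+2); case: (col k.+3) => //= _; lia.
- rewrite /gi !ifF; try lia.
  rewrite /= andbF muln0 addn0.
  have -> : (hi.+2 - lo.+2 = hi - lo)%N by lia.
  have -> : iota lo.+2 (hi - lo) = map (addn 2) (iota lo (hi - lo)) by rewrite -iotaDl.
  rewrite count_map; apply: eq_in_count => m; rewrite mem_iota => hm /=.
  by rewrite !ifF ?add2n //; lia.
Qed.

Lemma ebw_sym col b w : ebw col b w = ebw col w b.
Proof. by rewrite /ebw /absdiff /a_bw minnC maxnC. Qed.

Lemma ebw_aw col b w : (b < w)%N -> ebw col b w = ((w - b + aw col b w - 1) %/ 2)%N.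
Proof.
move=> hbw; rewrite /ebw /absdiff /a_bw /aw.
have -> : minn b w = b by apply/minn_idPl; lia.
by have -> : maxn b w = w by apply/maxn_idPr; lia.
Qed.

Lemma ebw_del i col b w : b != w -> col i != col i.+1 ->
  ebw col (gi i b) (gi i w) =
  (ebw (delc i col) b w + ((b < i) != (w < i)) * (1 + ddf col i))%N.
Proof.
wlog hbw : b w / (b < w)%N.
  move=> H hne hneq; case: (ltngtP b w) => hbw; first exact: H.
  - rewrite ebw_sym [ebw (delc i col) b w]ebw_sym H //; last by rewrite eq_sym.
    by case: (b < i); case: (w < i).
  - by move: hne; rewrite hbw eqxx.
move=> hne hneq.
have hg : (gi i b < gi i w)%N by rewrite gi_ltn.
rewrite ebw_aw // ebw_aw // aw_del //; last by lia.
have e : (gi i w - gi i b = w - b + 2 * ((b < i) && (i <= w)))%N.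
  by rewrite /gi; case: (ltnP b i); case: (ltnP w i) => /= *; lia.
rewrite e.
have -> : ((b < i) != (w < i)) = ((b < i) && (i <= w)).
  by case: (ltnP b i); case: (ltnP w i) => /= *; try lia.
case: ((b < i) && (i <= w)); case: (ddf col i) => /=; rewrite ?muln0 ?muln1 ?addn0; lia.
Qed.

Definition ginv (i m : nat) : nat := if m < i then m else m - 2.
Definition liftp (i : nat) (rho' : nat -> nat) (m : nat) : nat :=
  if m == i then i.+1 else if m == i.+1 then i else gi i (rho' (ginv i m)).

Lemma gi_lt_i i x : (gi i x < i) = (x < i).
Proof. apply/idP/idP; rewrite /gi; case: (ltnP x i) => h /= H; by [] || lia. Qed.
Lemma gi_lt_Si i x : (gi i x < i.+1) = (x < i).
Proof. apply/idP/idP; rewrite /gi; case: (ltnP x i) => h /= H; by [] || lia. Qed.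
Lemma i_lt_gi i x : (i < gi i x) = (i <= x).
Proof. apply/idP/idP; rewrite /gi; case: (ltnP x i) => h /= H; by [] || lia. Qed.
Lemma Si_lt_gi i x : (i.+1 < gi i x) = (i <= x).
Proof. apply/idP/idP; rewrite /gi; case: (ltnP x i) => h /= H; by [] || lia. Qed.
Lemma gi_neq_i i x : gi i x != i.
Proof. rewrite /gi; case: (ltnP x i) => h; apply/eqP; lia. Qed.
Lemma gi_neq_Si i x : gi i x != i.+1.
Proof. rewrite /gi; case: (ltnP x i) => h; apply/eqP; lia. Qed.
Lemma ginv_gi i x : ginv i (gi i x) = x.
Proof.
rewrite /ginv /gi; case: (ltnP x i) => h; first by rewrite h.
rewrite ifF; [lia | apply/negbTE; lia].
Qed.
Lemma gi_ginv i m : m != i -> m != i.+1 -> gi i (ginv i m) = m.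
Proof.
move=> /eqP h1 /eqP h2; rewrite /ginv /gi; case: (ltnP m i) => h; first by rewrite h.
rewrite ifF; [lia | apply/negbTE; lia].
Qed.
Lemma gi_inj i : injective (gi i).
Proof. by move=> a b e; rewrite -(ginv_gi i a) e ginv_gi. Qed.

Lemma lift_gi i rho' x : liftp i rho' (gi i x) = gi i (rho' x).
Proof. by rewrite /liftp (negbTE (gi_neq_i i x)) (negbTE (gi_neq_Si i x)) ginv_gi. Qed.

Section Del.
Variables (n' i : nat) (col : nat -> bool) (rho' : nat -> nat).
Hypothesis hi1 : (0 < i)%N.
Hypothesis hi2 : (i <= (2 * n').+1)%N.
Hypothesis hneq : col i != col i.+1.
Let n := n'.+1.
Let col' := delc i col.
Let rho := liftp i rho'.

Lemma gi_nodes u : u \in nodes n' -> gi i u \in nodes n.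
Proof. rewrite /nodes !mem_iota /gi => hu; case: (ltnP u i) => h; lia. Qed.

Lemma nodes_cases m : m \in nodes n -> m != i -> m != i.+1 ->
  ginv i m \in nodes n'.
Proof. rewrite /nodes !mem_iota /ginv => hm /eqP h1 /eqP h2; case: (ltnP m i) => h; lia. Qed.

Lemma i_nodes : i \in nodes n.
Proof. rewrite /nodes mem_iota; lia. Qed.
Lemma Si_nodes : i.+1 \in nodes n.
Proof. rewrite /nodes mem_iota; lia. Qed.

Lemma rho_i : rho i = i.+1.
Proof. by rewrite /rho /liftp eqxx. Qed.
Lemma rho_Si : rho i.+1 = i.
Proof. by rewrite /rho /liftp ifF ?eqxx //; apply/eqP; lia. Qed.

Lemma col_Si : col i.+1 = ~~ col i.
Proof. by move: hneq; case: (col i); case: (col i.+1). Qed.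

Lemma lift_bw : is_bw_pairing n' col' rho' -> is_bw_pairing n col rho.
Proof.
move=> hp m hm.
case: (eqVneq m i) => [->|h1].
  by rewrite rho_i rho_Si Si_nodes col_Si; case: (col i).
case: (eqVneq m i.+1) => [->|h2].
  by rewrite rho_Si rho_i i_nodes col_Si; case: (col i).
have hu := nodes_cases hm h1 h2.
rewrite -(gi_ginv h1 h2) /rho !lift_gi.
have [r1 r2 r3] := hp _ hu.
split; [exact: gi_nodes | by rewrite r2 |].
exact: r3.
Qed.

Lemma lift_planar : is_bw_pairing n' col' rho' -> planar n' rho' -> planar n rho.
Proof.
move=> hbw hpl a b c d aN bN cN dN hab hbc hcd hac hbd.
have hbw2 := lift_bw hbw.
have [_ ra _] := hbw2 a aN.
have [_ rb _] := hbw2 b bN.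
(* none of a b c d is i or i.+1 *)
have key : forall x, x \in nodes n -> (x == i) || (x == i.+1) -> (rho x == i) || (rho x == i.+1).
  move=> x _ /orP[/eqP->|/eqP->]; by rewrite ?rho_i ?rho_Si eqxx ?orbT.
have key2 : forall x, x != i -> x != i.+1 -> (rho x != i) && (rho x != i.+1).
  by move=> x h1 h2; rewrite /rho -(gi_ginv h1 h2) lift_gi gi_neq_i gi_neq_Si.
case: (boolP ((a == i) || (a == i.+1))) => ha.
  have := key a aN ha; rewrite hac; move: ha => /orP[] /eqP ? /orP[] /eqP ?; lia.
case: (boolP ((b == i) || (b == i.+1))) => hb.
  have := key b bN hb; rewrite hbd; move: hb => /orP[] /eqP ? /orP[] /eqP ?; lia.
move: ha hb; rewrite !negb_or => /andP[ha1 ha2] /andP[hb1 hb2].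
have /andP[hc1 hc2] := key2 a ha1 ha2; rewrite hac in hc1 hc2.
have /andP[hd1 hd2] := key2 b hb1 hb2; rewrite hbd in hd1 hd2.
move: hac hbd hab hbc hcd.
rewrite /rho -(gi_ginv ha1 ha2) -(gi_ginv hb1 hb2) -(gi_ginv hc1 hc2) -(gi_ginv hd1 hd2) !lift_gi.
move=> /gi_inj hac /gi_inj hbd; rewrite !gi_ltn => hab hbc hcd.
apply: (hpl _ _ _ _ _ _ _ _ hab hbc hcd hac hbd); exact: nodes_cases.
Qed.

Lemma count_del : count col (nodes n) = n -> count col' (nodes n') = n'.
Proof.
rewrite !count_sum (sum_split (fun m => (col m : nat)) hi1 hi2) col_Si.
by case: (col i) => /=; rewrite /col' /delc; lia.
Qed.

Lemma inner_split (F : nat -> nat) :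
  \sum_(b' <- nodes n | col b') F b' =
  (\sum_(m <- nodes n' | col' m) F (gi i m) + (if col i then F i else 0) +
     (if col i.+1 then F i.+1 else 0))%N.
Proof.
by rewrite big_mkcond (sum_split (fun b => if col b then F b else 0) hi1 hi2) [in RHS]big_mkcond.
Qed.

Lemma EB_del : EB n col rho = (EB n' col' rho' + Sst n' col' rho' i)%N.
Proof.
set T := fun b b' => ((b < b') && (rho b' < rho b) : nat).
have hT1 m m' : T (gi i m) (gi i m') = ((m < m') && (rho' m' < rho' m) : nat).
  by rewrite /T /rho !lift_gi !gi_ltn.
have hT2 m : ((if col i then T (gi i m) i else 0) + (if col i.+1 then T (gi i m) i.+1 else 0))%N
    = ((m < i) && (i <= rho' m) : nat).
  rewrite col_Si /T /rho lift_gi -/rho rho_i rho_Si gi_lt_i gi_lt_Si Si_lt_gi i_lt_gi.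
  by case: (col i); rewrite /= ?addn0.
have hT3 : ((if col i then \sum_(b' <- nodes n | col b') T i b' else 0) +
            (if col i.+1 then \sum_(b' <- nodes n | col b') T i.+1 b' else 0))%N
    = \sum_(m <- nodes n' | col' m) ((i <= m) && (rho' m < i) : nat).
  rewrite !inner_split col_Si /T rho_i rho_Si ltnn.
  case: (col i) => /=; rewrite ?addn0 ?add0n.
  - apply: eq_bigr => m _; by rewrite /rho lift_gi i_lt_gi gi_lt_Si.
  - rewrite /= ltnn /= addn0; apply: eq_bigr => m _; by rewrite /rho lift_gi Si_lt_gi gi_lt_i.
have -> : EB n col rho = \sum_(b <- nodes n | col b) \sum_(b' <- nodes n | col b') T b b' by [].
rewrite inner_split -addnA hT3.
rewrite (eq_bigr (fun m => (\sum_(m' <- nodes n' | col' m') ((m < m') && (rho' m' < rho' m) : nat)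
                             + ((m < i) && (i <= rho' m) : nat))%N)); last first.
  move=> m _; rewrite inner_split -addnA hT2; congr (_ + _).
  by apply: eq_bigr => m' _; rewrite hT1.
rewrite big_split /= -addnA; congr (_ + _).
rewrite /Sst -big_split /=; apply: eq_bigr => m _.
by case: (ltnP m i); case: (ltnP (rho' m) i).
Qed.

Lemma ES_del : is_bw_pairing n' col' rho' ->
  ES n col rho = (ES n' col' rho' + Sst n' col' rho' i * (1 + ddf col i))%N.
Proof.
move=> hp.
rewrite /ES inner_split col_Si rho_i rho_Si.
have e0 : ebw col i i.+1 = 0%N.
  rewrite ebw_aw // /aw.
  have -> : (i.+1 - i = 1)%N by lia.
  by rewrite /= (negbTE hneq).
have e1 : ebw col i.+1 i = 0%N by rewrite ebw_sym.
rewrite e0 e1; case: (col i); rewrite /= !addn0.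
all: rewrite /Sst big_distrl /= -big_split /= big_seq_cond [RHS]big_seq_cond.
all: apply: eq_bigr => m /andP[mN hm].
all: have [_ _ hc] := hp m mN.
all: have hne : m != rho' m by apply/eqP => e; move: hc; rewrite -e eqxx.
all: by rewrite /rho lift_gi ebw_del.
Qed.

End Del.

Definition Eex n col rho := (EB n col rho + ES n col rho)%N.
Definition Pn n := forall col, count col (nodes n) = n -> exists rho,
  [/\ is_bw_pairing n col rho, planar n rho &
      (Eex n col rho) %% 2 = (Tex (map col (couples n col)) (col 1%N)) %% 2].

Lemma step n' i col : (0 < i)%N -> (i <= (2 * n').+1)%N -> col i != col i.+1 ->
  count col (nodes n'.+1) = n'.+1 -> Pn n' ->
  exists rho, [/\ is_bw_pairing n'.+1 col rho, planar n'.+1 rho &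
    (Eex n'.+1 col rho) %% 2 =
    (Tex (map (delc i col) (couples n' (delc i col))) (delc i col 1%N) + i.-1 * ddf col i) %% 2].
Proof.
move=> h1 h2 hneq hcol IH.
have hc' := count_del h1 h2 hneq hcol.
have [rho' [hp' hpl' hE']] := IH _ hc'.
exists (liftp i rho'); split.
- move=> m hm; exact: (lift_bw h1 h2 hneq hp').
- move=> a b c d ha hb hc hd; exact: (lift_planar h1 h2 hneq hp' hpl').
rewrite /Eex (EB_del rho' h1 h2 hneq) (ES_del h1 h2 hneq hp').
have hS := S_par hp' h1 h2.
move: hE'; rewrite /Eex => hE'.
move: hS hE'; case: (ddf col i) => /= hS hE'; rewrite ?muln0 ?muln1 ?addn0; lia.
Qed.

Lemma Tex_nil c : Tex [::] c = 0%N.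
Proof. by rewrite /Tex /= /Fk big_ord0. Qed.

Lemma Fk0 c : Fk c 0 = 0%N.
Proof. by rewrite /Fk big_ord0. Qed.

Lemma Fk1 c : Fk c 1 = c.
Proof. by rewrite Fk_S /Fk big_ord0. Qed.

Lemma all_const (col : nat -> bool) k :
  (forall i, (2 <= i)%N -> (i <= k)%N -> col i = col i.+1) ->
  forall m, (2 <= m)%N -> (m <= k.+1)%N -> col m = col 2%N.
Proof.
move=> H; elim => [|m IHm] //= h1 h2.
case: (eqVneq m 1%N) => [->//|hm1].
rewrite -H; [apply: IHm|..]; lia.
Qed.

Lemma P0 : Pn 0.
Proof.
move=> col _; exists id; split.
- by move=> m; rewrite /nodes.
- by move=> a b c d; rewrite /nodes.
- by rewrite /Eex /EB /ES /couples /nodes /= !big_nil Tex_nil.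
Qed.

Lemma mainP n : Pn n.
Proof.
elim: n {-2}n (leqnn n) => [|N IHN] n hn.
  by move: hn; rewrite leqn0 => /eqP ->; exact: P0.
case: n hn => [|n'] hn; first exact: P0.
have IH : Pn n' by apply: IHN; lia.
move=> col hcol.
case: (boolP (has (fun i => col i != col i.+1) (iota 2 (2 * n' - 1)))).
  move=> /hasP[i]; rewrite mem_iota => hi hneq.
  have [j ej] : exists j, i = j.+2 by exists i.-2; lia.
  have h1 : (0 < i)%N by lia.
  have h2 : (i <= (2 * n').+1)%N by lia.
  have [rho [hp hpl hE]] := step h1 h2 hneq hcol IH.
  exists rho; split => //; rewrite hE.
  have [r er] : exists r, (2 * n'.+1 = j + 3 + r)%N by exists (2 * n'.+1 - j - 3)%N; lia.
  have hr : (0 < r)%N by lia.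
  rewrite ej in hneq.
  rewrite (Tdel er hr hneq hcol) ej /ddf /=.
  by [].
move=> hno.
have hc : forall i, (2 <= i)%N -> (i <= 2 * n')%N -> col i = col i.+1.
  move=> i hi1 hi2; apply/eqP; rewrite -[_ == _]negbK; apply/negP => hne.
  move/negP: hno; apply; apply/hasP; exists i => //; rewrite mem_iota; lia.
have hconst := all_const hc.
have hnodes : nodes n'.+1 = 1%N :: iota 2 (2 * n') ++ [:: (2 * n').+2].
  rewrite /nodes; have -> : (2 * n'.+1 = (2 * n' + 1).+1)%N by lia.
  by rewrite /= iotaD /= add2n.
have hcnt : count col (iota 2 (2 * n')) = (col 2%N * (2 * n'))%N.
  case e2 : (col 2%N).
    rewrite (eq_in_count (a2 := predT)) ?count_predT ?size_iota ?mul1n //.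
    by move=> m; rewrite mem_iota => hm; rewrite /= hconst ?e2 //; lia.
  rewrite (eq_in_count (a2 := pred0)) ?count_pred0 //.
  by move=> m; rewrite mem_iota => hm; rewrite /= hconst ?e2 //; lia.
move: (hcol); rewrite hnodes /= count_cat hcnt /= addn0 => hcol2.
have [n0|[n1|nbig]] : n' = 0%N \/ n' = 1%N \/ (2 <= n')%N by lia.
- subst n'.
  have hneq : col 1%N != col 2%N by move: hcol2; case: (col 1%N); case: (col 2%N).
  have [rho [hp hpl hE]] := @step 0 1 col isT isT hneq hcol IH.
  exists rho; split => //; rewrite hE /couples /nodes /= Tex_nil.
  rewrite /next_node /=.
  by move: hneq; case: (col 1%N); case: (col 2%N); rewrite /= ?Tex_nil.
- subst n'.
  have e3 : col 3%N = col 2%N by symmetry; apply: hc.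
  have hneq : col 1%N != col 2%N.
    by move: hcol2; case: (col 1%N); case: (col 2%N); case: (col 4%N).
  have [rho [hp hpl hE]] := @step 1 1 col isT isT hneq hcol IH.
  have e2 : col 2%N = ~~ col 1%N by move: hneq; case: (col 1%N); case: (col 2%N).
  have e4 : col 4%N = col 1%N.
    by move: hcol2 hneq; case: (col 1%N); case: (col 2%N); case: (col 4%N).
  exists rho; split => //.
  rewrite hE /couples /nodes /= /next_node /= /delc /gi /= e3 e2 e4.
  move: e2 e4; case: (col 1%N) => /= e2 e4; rewrite ?e2 ?e4 /=;
    case: (ddf col 1); rewrite /Tex /= ?Fk1 ?Fk0; by vm_compute.
- exfalso; move: hcol2; case: (col 1%N); case: (col 2%N); case: (col (2 * n').+2) => /=; lia.
Qed.

Theorem main_result (n : nat) (col : nat -> bool)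
    (hcol : count col (nodes n) = n) :
  exists rho : nat -> nat,
    [/\ is_bw_pairing n col rho, planar n rho &
        (sign_BW n col rho * \prod_(b <- nodes n | col b) sign_bw col b (rho b)
        = sign_c n col)%R].
Proof.
have [rho [hp hpl hE]] := mainP hcol.
exists rho; split => //.
by rewrite (En_eq hp) (T1 (kbkw hcol)); apply: sgn_mod2.
Qed.

End Aux.

Local Open Scope ring_scope.

Theorem mainTheorem6 (n : nat) (col : nat -> bool)
    (hcol : count col (nodes n) = n) :
  exists rho : nat -> nat,
    [/\ is_bw_pairing n col rho, planar n rho &
        sign_BW n col rho * \prod_(b <- nodes n | col b) sign_bw col b (rho b)
        = sign_c n col].
Proof. exact: (Aux.main_result hcol). Qed.
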